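(* Let $A=A_{\bar 0}\oplus A_{\bar 1}$ be a finite-dimensional associative superalgebra over an algebraically closed field $\mathbb{K}$ of characteristic zero. Then $A$ admits an odd-symmetric structure if and only if there exists an isomorphism of $A_{\bar 0}$-bimodules $\phi:A_{\bar 1}\to A_{\bar 0}^*$ such that $\phi(x)(y.z)=\phi(z)(x.y)$ for all $x,y,z\in A_{\bar 1}$.
   Context: A superalgebra is a $\mathbb{Z}_2$-graded algebra $A=A_{\bar 0}\oplus A_{\bar 1}$ with $A_\alpha A_\beta\subseteq A_{\alpha+\beta}$; $|x|$ denotes the degree of a homogeneous element. A bilinear form $B$ on $A$ is odd if $B(A_{\bar 0},A_{\bar 0})=B(A_{\bar 1},A_{\bar 1})=\{0\}$; supersymmetric if $B(x,y)=(-1)^{|x||y|}B(y,x)$ for homogeneous $x,y$; associative if $B(x.y,z)=B(x,y.z)$; non-degenerate if $B(x,A)=\{0\}$ implies $x=0$. An odd-symmetric structure on $A$ is an odd, supersymmetric, associative, non-degenerate bilinear form on $A$. $A_{\bar 1}$ is an $A_{\bar 0}$-bimodule via left and right multiplication, and $A_{\bar 0}^*$ is an $A_{\bar 0}$-bimodule via $(x\cdot f)(y)=f(y.x)$ and $(f\cdot x)(y)=f(x.y)$ for $x,y\in A_{\bar 0}$, $f\in A_{\bar 0}^*$. *)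

(* Defs.v *)
From HB Require Import structures.
From mathcomp Require Import all_boot all_order all_algebra all_field.
Unset Printing Implicit Defensive.
Import Order.TTheory GRing.Theory Num.Theory.
Local Open Scope ring_scope.

Section Super.
Context {K : fieldType} {A : vectType K}.

Definition bilinear_map (V : lmodType K) (f : A -> A -> V) : Prop :=
  (forall (a : K) (x y z : A), f (a *: x + y) z = a *: f x z + f y z) /\
  (forall (a : K) (x y z : A), f x (a *: y + z) = a *: f x y + f x z).

Definition assoc_superalgebra (mul : A -> A -> A) (A0 A1 : {vspace A}) : Prop :=
  [/\ @bilinear_map A mul,
      (forall x y z, mul (mul x y) z = mul x (mul y z)),
      (A0 + A1)%VS = fullv, directv (A0 + A1)%VS &
      (forall x y, [/\ (x \in A0 -> y \in A0 -> mul x y \in A0),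
                       (x \in A0 -> y \in A1 -> mul x y \in A1),
                       (x \in A1 -> y \in A0 -> mul x y \in A1) &
                       (x \in A1 -> y \in A1 -> mul x y \in A0)])].

Definition odd_form (A0 A1 : {vspace A}) (B : A -> A -> K^o) : Prop :=
  forall x y, (x \in A0 -> y \in A0 -> B x y = 0) /\ (x \in A1 -> y \in A1 -> B x y = 0).

(* supersymmetric: B(x,y) = (-1)^{|x||y|} B(y,x) for homogeneous x, y *)
Definition supersymmetric_form (A0 A1 : {vspace A}) (B : A -> A -> K^o) : Prop :=
  forall x y, [/\ (x \in A0 -> y \in A0 -> B x y = B y x),
                  (x \in A0 -> y \in A1 -> B x y = B y x),
                  (x \in A1 -> y \in A0 -> B x y = B y x) &
                  (x \in A1 -> y \in A1 -> B x y = - B y x)].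

Definition associative_form (mul : A -> A -> A) (B : A -> A -> K^o) : Prop :=
  forall x y z, B (mul x y) z = B x (mul y z).

Definition nondegenerate_form (B : A -> A -> K^o) : Prop :=
  forall x, (forall y, B x y = 0) -> x = 0.

Definition odd_symmetric_structure (mul : A -> A -> A) (A0 A1 : {vspace A})
    (B : A -> A -> K^o) : Prop :=
  [/\ @bilinear_map K^o B, odd_form A0 A1 B, supersymmetric_form A0 A1 B,
      associative_form mul B & nondegenerate_form B].

Definition lact1 (mul : A -> A -> A) (A0 A1 : {vspace A})
    (a : subvs_of A0) (v : subvs_of A1) : subvs_of A1 :=
  vsproj A1 (mul (vsval a) (vsval v)).
Definition ract1 (mul : A -> A -> A) (A0 A1 : {vspace A})
    (v : subvs_of A1) (a : subvs_of A0) : subvs_of A1 :=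
  vsproj A1 (mul (vsval v) (vsval a)).
Definition mul0 (mul : A -> A -> A) (A0 : {vspace A})
    (a b : subvs_of A0) : subvs_of A0 :=
  vsproj A0 (mul (vsval a) (vsval b)).
Definition mul11 (mul : A -> A -> A) (A0 A1 : {vspace A})
    (u v : subvs_of A1) : subvs_of A0 :=
  vsproj A0 (mul (vsval u) (vsval v)).

Definition lact_dual (mul : A -> A -> A) (A0 : {vspace A})
    (x : subvs_of A0) (f : 'Hom(subvs_of A0, K^o)) : subvs_of A0 -> K^o :=
  fun y => f (mul0 mul A0 y x).
Definition ract_dual (mul : A -> A -> A) (A0 : {vspace A})
    (f : 'Hom(subvs_of A0, K^o)) (x : subvs_of A0) : subvs_of A0 -> K^o :=
  fun y => f (mul0 mul A0 x y).

Definition bimodule_iso (mul : A -> A -> A) (A0 A1 : {vspace A})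
    (phi : subvs_of A1 -> 'Hom(subvs_of A0, K^o)) : Prop :=
  [/\ (forall (c : K) u v, phi (c *: u + v) = c *: phi u + phi v),
      bijective phi,
      (forall a v, (phi (lact1 mul A0 A1 a v) : subvs_of A0 -> K^o) =1 lact_dual mul A0 a (phi v)) &
      (forall v a, (phi (ract1 mul A0 A1 v a) : subvs_of A0 -> K^o) =1 ract_dual mul A0 (phi v) a)].

End Super.

(* Main.v *)
Require Import Defs.
From HB Require Import structures.
From mathcomp Require Import all_boot all_order all_algebra all_field.
From mathcomp Require Import ring.
Import GRing.Theory.
Local Open Scope ring_scope.
Section HomOf.
Variables (K : fieldType) (aT rT : vectType K).
Definition hof (f : aT -> rT) (fL : linear f) : aT -> rT := f.
HB.instance Definition _ f fL := GRing.isLinear.Build K aT rT *:%R (@hof f fL) fL.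

Lemma hom_of (f : aT -> rT) : linear f -> exists g : 'Hom(aT, rT), g =1 f.
Proof. move=> fL; exists (linfun (@hof f fL)) => x; by rewrite lfunE. Qed.

Lemma lin_inj_dim (f : aT -> rT) : linear f -> injective f -> (dim aT <= dim rT)%N.
Proof.
move=> fL finj; have [g gE] := @hom_of f fL.
have g0 : lker g == 0%VS by apply/lker0P => x y; rewrite !gE; apply: finj.
rewrite -dimvf -(limg_dim_eq (f := g)) ?(eqP g0) ?capv0 //.
by rewrite -[dim rT]dimvf dimvS ?subvf.
Qed.

Lemma lin_inj_bij (f : aT -> rT) : linear f -> injective f -> (dim rT <= dim aT)%N ->
  bijective f.
Proof.
move=> fL finj hd; have [g gE] := @hom_of f fL.
have g0 : lker g == 0%VS by apply/lker0P => x y; rewrite !gE; apply: finj.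
have gf : limg g = fullv.
  apply/eqP; rewrite eqEdim subvf limg_dim_eq ?(eqP g0) ?capv0 //.
  by rewrite !dimvf.
exists (g^-1%VF) => x; first by rewrite -gE lker0_lfunK.
by rewrite -gE limg_lfunVK // gf memvf.
Qed.
End HomOf.

Lemma lin_inj0 (K : fieldType) (aT rT : vectType K) (f : aT -> rT) :
  linear f -> (forall x, f x = 0 -> x = 0) -> injective f.
Proof.
move=> fL h x y e; apply/eqP; rewrite -subr_eq0; apply/eqP/h.
by rewrite (zmod_morphism_linear fL) e subrr.
Qed.

Arguments lin_inj0 {K aT rT f}.
Arguments lin_inj_dim {K aT rT f}.
Arguments lin_inj_bij {K aT rT f}.

Section Main.
Variables (K : fieldType) (A : vectType K) (mul : A -> A -> A) (A0 A1 : {vspace A}).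
Hypothesis hA : assoc_superalgebra mul A0 A1.

Lemma mulDl x y z : mul (x + y) z = mul x z + mul y z.
Proof. case: hA => bl _ _ _ _; case: bl => h _; by have := h 1 x y z; rewrite !scale1r. Qed.
Lemma mulDr x y z : mul x (y + z) = mul x y + mul x z.
Proof. case: hA => bl _ _ _ _; case: bl => _ h; by have := h 1 x y z; rewrite !scale1r. Qed.
Lemma mulA x y z : mul (mul x y) z = mul x (mul y z).
Proof. by case: hA. Qed.
Lemma mul00 x y : x \in A0 -> y \in A0 -> mul x y \in A0.
Proof. by case: hA => _ _ _ _ /(_ x y) []. Qed.
Lemma mul01 x y : x \in A0 -> y \in A1 -> mul x y \in A1.
Proof. by case: hA => _ _ _ _ /(_ x y) []. Qed.
Lemma mul10 x y : x \in A1 -> y \in A0 -> mul x y \in A1.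
Proof. by case: hA => _ _ _ _ /(_ x y) []. Qed.
Lemma mul11' x y : x \in A1 -> y \in A1 -> mul x y \in A0.
Proof. by case: hA => _ _ _ _ /(_ x y) []. Qed.

Lemma cap01 : (A0 :&: A1 = 0)%VS.
Proof. by case: hA => _ _ _ /directv_addP. Qed.
Lemma cap10 : (A1 :&: A0 = 0)%VS.
Proof. by rewrite capvC cap01. Qed.

Definition p0 := daddv_pi A0 A1.
Definition p1 := daddv_pi A1 A0.

Lemma decomp x : x = p0 x + p1 x.
Proof.
case: hA => _ _ hf _ _.
by rewrite /p0 /p1 daddv_pi_add ?cap01 // hf memvf.
Qed.
Lemma p0_in x : p0 x \in A0. Proof. exact: memv_pi. Qed.
Lemma p1_in x : p1 x \in A1. Proof. exact: memv_pi. Qed.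
Lemma p0_id x : x \in A0 -> p0 x = x. Proof. exact: daddv_pi_id cap01. Qed.
Lemma p1_id x : x \in A1 -> p1 x = x. Proof. exact: daddv_pi_id cap10. Qed.
Lemma p0_1 x : x \in A1 -> p0 x = 0.
Proof.
move=> h; have := decomp x; rewrite p1_id // => e.
have : p0 x + x - x = x - x by rewrite -e.
by rewrite addrK subrr.
Qed.
Lemma p1_0 x : x \in A0 -> p1 x = 0.
Proof.
move=> h; have := decomp x; rewrite p0_id // => e.
have : x + p1 x - x = x - x by rewrite -e.
by rewrite addrC addKr subrr.
Qed.

Section Fwd.
Variable B : A -> A -> K^o.
Hypothesis hB : odd_symmetric_structure mul A0 A1 B.

Lemma BlinL c x y z : B (c *: x + y) z = c *: B x z + B y z.
Proof. by case: hB => bl _ _ _ _; case: bl. Qed.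
Lemma BlinR c x y z : B x (c *: y + z) = c *: B x y + B x z.
Proof. by case: hB => bl _ _ _ _; case: bl. Qed.
Lemma BDr x y z : B x (y + z) = B x y + B x z.
Proof. by have := BlinR 1 x y z; rewrite !scale1r. Qed.
Lemma BDl x y z : B (x + y) z = B x z + B y z.
Proof. by have := BlinL 1 x y z; rewrite !scale1r. Qed.
Lemma Bassoc x y z : B (mul x y) z = B x (mul y z).
Proof. by case: hB. Qed.
Lemma B00 x y : x \in A0 -> y \in A0 -> B x y = 0.
Proof. by case: hB => _ /(_ x y) [h _] _ _ _; apply: h. Qed.
Lemma B11 x y : x \in A1 -> y \in A1 -> B x y = 0.
Proof. by case: hB => _ /(_ x y) [_ h] _ _ _; apply: h. Qed.
Lemma Bsym01 x y : x \in A0 -> y \in A1 -> B x y = B y x.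
Proof. by case: hB => _ _ /(_ x y) [_ h _ _] _ _; apply: h. Qed.
Lemma Bsym10 x y : x \in A1 -> y \in A0 -> B x y = B y x.
Proof. by case: hB => _ _ /(_ x y) [_ _ h _] _ _; apply: h. Qed.
Lemma Bnd x : (forall y, B x y = 0) -> x = 0.
Proof. by case: hB => _ _ _ _; apply. Qed.

Lemma Bnd' x : (forall y, y \in A0 -> B x y = 0) -> (forall y, y \in A1 -> B x y = 0) -> x = 0.
Proof.
move=> h0 h1; apply: Bnd => y; rewrite (decomp y) BDr h0 ?p0_in // h1 ?p1_in //.
by rewrite addr0.
Qed.

Definition Bf (v : subvs_of A1) : subvs_of A0 -> K^o := fun a => B (vsval v) (vsval a).
Lemma Bf_lin v : linear (Bf v).
Proof. by move=> c a b; rewrite /Bf linearP /= BlinR. Qed.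
Definition phiB v : 'Hom(subvs_of A0, K^o) := linfun (@hof _ _ _ _ (Bf_lin v)).
Lemma phiBE v a : phiB v a = B (vsval v) (vsval a).
Proof. by rewrite lfunE. Qed.

Definition Cf (a : subvs_of A0) : subvs_of A1 -> K^o := fun v => B (vsval a) (vsval v).
Lemma Cf_lin a : linear (Cf a).
Proof. by move=> c u v; rewrite /Cf linearP /= BlinR. Qed.
Definition psiB a : 'Hom(subvs_of A1, K^o) := linfun (@hof _ _ _ _ (Cf_lin a)).
Lemma psiBE a v : psiB a v = B (vsval a) (vsval v).
Proof. by rewrite lfunE. Qed.

Lemma phiB_lin : linear phiB.
Proof.
move=> c u v; apply/lfunP => a.
by rewrite add_lfunE scale_lfunE !phiBE linearP /= BlinL.
Qed.
Lemma psiB_lin : linear psiB.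
Proof.
move=> c u v; apply/lfunP => a.
by rewrite add_lfunE scale_lfunE !psiBE linearP /= BlinL.
Qed.

Lemma phiB_inj : injective phiB.
Proof.
apply: (lin_inj0 phiB_lin) => v /lfunP h; apply/subvs_inj; rewrite linear0.
apply: Bnd'.
  move=> y y0; have := h (vsproj A0 y); rewrite phiBE zero_lfunE vsprojK //.
by move=> y y1; rewrite B11 // subvsP.
Qed.
Lemma psiB_inj : injective psiB.
Proof.
apply: (lin_inj0 psiB_lin) => v /lfunP h; apply/subvs_inj; rewrite linear0.
apply: Bnd'; last first.
  move=> y y1; have := h (vsproj A1 y); rewrite psiBE zero_lfunE vsprojK //.
by move=> y y0; rewrite B00 // subvsP.
Qed.

Lemma fwd : exists phi : subvs_of A1 -> 'Hom(subvs_of A0, K^o),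
      bimodule_iso mul A0 A1 phi /\
      forall x y z : subvs_of A1,
        phi x (mul11 mul A0 A1 y z) = phi z (mul11 mul A0 A1 x y).
Proof.
exists phiB; split; last first.
  move=> x y z; rewrite !phiBE /mul11 !vsprojK ?mul11' ?subvsP //.
  by rewrite -Bassoc Bsym01 ?mul11' ?subvsP.
split.
- exact: phiB_lin.
- apply: lin_inj_bij phiB_lin phiB_inj _.
  have := lin_inj_dim psiB_lin psiB_inj.
  have e1 : dim 'Hom(subvs_of A1, K^o) = (\dim A1 * 1)%N by [].
  have e0 : dim 'Hom(subvs_of A0, K^o) = (\dim A0 * 1)%N by [].
  by rewrite e0 e1 !muln1.
- move=> a v y; rewrite phiBE /lact_dual phiBE /lact1 /mul0 !vsprojK;
    rewrite ?mul01 ?mul00 ?subvsP //.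
  rewrite Bsym10 ?mul01 ?subvsP // -Bassoc Bsym01 ?mul00 ?subvsP //.
- move=> v a y; rewrite phiBE /ract_dual phiBE /ract1 /mul0 !vsprojK;
    rewrite ?mul10 ?mul00 ?subvsP //.
  by rewrite Bassoc.
Qed.
End Fwd.

Lemma dual_sep (w : subvs_of A0) :
  (forall f : 'Hom(subvs_of A0, K^o), f w = 0) -> w = 0.
Proof.
move=> h; rewrite (coord_vbasis (memvf w)); apply: big1 => i _.
have [g gE] := @hom_of K (subvs_of A0) K^o (coord (vbasis fullv) i)
  (coord_is_scalar _ _).
by rewrite -gE h scale0r.
Qed.

Section Bwd.
Variable phi : subvs_of A1 -> 'Hom(subvs_of A0, K^o).
Hypothesis hphi : bimodule_iso mul A0 A1 phi.
Hypothesis hcyc : forall x y z : subvs_of A1,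
        phi x (mul11 mul A0 A1 y z) = phi z (mul11 mul A0 A1 x y).

Lemma phi_lin c u v : phi (c *: u + v) = c *: phi u + phi v.
Proof. by case: hphi. Qed.
Lemma phi0 : phi 0 = 0.
Proof.
have := phi_lin 1 0 0; rewrite !scale1r addr0 => h.
have := congr1 (fun f => f - phi 0) h; rewrite addrK subrr.
by move=> <-.
Qed.

Definition pr0 x := vsproj A0 (p0 x).
Definition pr1 x := vsproj A1 (p1 x).
Definition Bv x y := phi (vsproj A1 x) (vsproj A0 y).
Definition Bd x y := phi (pr1 x) (pr0 y) + phi (pr1 y) (pr0 x).

Lemma pr0_lin c x y : pr0 (c *: x + y) = c *: pr0 x + pr0 y.
Proof. by rewrite /pr0 !linearP. Qed.
Lemma pr1_lin c x y : pr1 (c *: x + y) = c *: pr1 x + pr1 y.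
Proof. by rewrite /pr1 !linearP. Qed.
Lemma pr0_0 x : x \in A0 -> pr0 x = vsproj A0 x.
Proof. by move=> h; rewrite /pr0 p0_id. Qed.
Lemma pr0_1 x : x \in A1 -> pr0 x = 0.
Proof. by move=> h; rewrite /pr0 p0_1 // linear0. Qed.
Lemma pr1_1 x : x \in A1 -> pr1 x = vsproj A1 x.
Proof. by move=> h; rewrite /pr1 p1_id. Qed.
Lemma pr1_0 x : x \in A0 -> pr1 x = 0.
Proof. by move=> h; rewrite /pr1 p1_0 // linear0. Qed.

Lemma BdL c x y z : Bd (c *: x + y) z = c *: Bd x z + Bd y z.
Proof.
rewrite /Bd pr0_lin pr1_lin phi_lin add_lfunE scale_lfunE linearP.
by rewrite scalerDr addrACA.
Qed.
Lemma BdR c x y z : Bd x (c *: y + z) = c *: Bd x y + Bd x z.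
Proof.
rewrite /Bd pr0_lin pr1_lin phi_lin add_lfunE scale_lfunE linearP.
by rewrite scalerDr addrACA.
Qed.
Lemma BdDl x y z : Bd (x + y) z = Bd x z + Bd y z.
Proof. by have := BdL 1 x y z; rewrite !scale1r. Qed.
Lemma BdDr x y z : Bd x (y + z) = Bd x y + Bd x z.
Proof. by have := BdR 1 x y z; rewrite !scale1r. Qed.

Lemma B_00 x y : x \in A0 -> y \in A0 -> Bd x y = 0.
Proof. by move=> hx hy; rewrite /Bd !pr1_0 // phi0 !zero_lfunE addr0. Qed.
Lemma B_11 x y : x \in A1 -> y \in A1 -> Bd x y = 0.
Proof. by move=> hx hy; rewrite /Bd !pr0_1 // !linear0 addr0. Qed.
Lemma B_10 x y : x \in A1 -> y \in A0 -> Bd x y = Bv x y.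
Proof.
by move=> hx hy; rewrite /Bd (pr0_1 _ hx) (pr1_0 _ hy) linear0 addr0 (pr1_1 _ hx) (pr0_0 _ hy).
Qed.
Lemma B_01 x y : x \in A0 -> y \in A1 -> Bd x y = Bv y x.
Proof.
by move=> hx hy; rewrite /Bd (pr0_1 _ hy) (pr1_0 _ hx) phi0 zero_lfunE add0r (pr1_1 _ hy) (pr0_0 _ hx).
Qed.

Lemma L_ract x y w : x \in A1 -> y \in A0 -> w \in A0 ->
  Bv (mul x y) w = Bv x (mul y w).
Proof.
move=> hx hy hw; case: hphi => _ _ _ /(_ (vsproj A1 x) (vsproj A0 y) (vsproj A0 w)).
by rewrite /ract1 /ract_dual /mul0 /Bv !vsprojK.
Qed.
Lemma L_lact x y w : x \in A0 -> y \in A1 -> w \in A0 ->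
  Bv (mul x y) w = Bv y (mul w x).
Proof.
move=> hx hy hw; case: hphi => _ _ h _; have := h (vsproj A0 x) (vsproj A1 y) (vsproj A0 w).
by rewrite /lact1 /lact_dual /mul0 /Bv !vsprojK.
Qed.
Lemma L_cyc x y z : x \in A1 -> y \in A1 -> z \in A1 ->
  Bv x (mul y z) = Bv z (mul x y).
Proof.
move=> hx hy hz; have := hcyc (vsproj A1 x) (vsproj A1 y) (vsproj A1 z).
by rewrite /mul11 /Bv !vsprojK.
Qed.

Lemma Bd_assoc x y z : Bd (mul x y) z = Bd x (mul y z).
Proof.
rewrite (decomp x) (decomp y) (decomp z).
have a0 := p0_in x; have a1 := p1_in x; have b0 := p0_in y; have b1 := p1_in y.
have c0 := p0_in z; have c1 := p1_in z.
move: (p0 x) (p1 x) (p0 y) (p1 y) (p0 z) (p1 z) a0 a1 b0 b1 c0 c1.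
move=> x0 x1 y0 y1 z0 z1 hx0 hx1 hy0 hy1 hz0 hz1.
rewrite !mulDl !mulDr !BdDl !BdDr.
have e000 : Bd (mul x0 y0) z0 = Bd x0 (mul y0 z0) by rewrite !B_00 ?mul00.
have e110 : Bd (mul x1 y1) z0 = Bd x1 (mul y1 z0)
  by rewrite B_00 ?mul11' // B_11 ?mul10.
have e101 : Bd (mul x1 y0) z1 = Bd x1 (mul y0 z1)
  by rewrite B_11 ?mul10 // B_11 ?mul01.
have e011 : Bd (mul x0 y1) z1 = Bd x0 (mul y1 z1)
  by rewrite B_11 ?mul01 // B_00 ?mul11'.
have e100 : Bd (mul x1 y0) z0 = Bd x1 (mul y0 z0)
  by rewrite B_10 ?mul10 // B_10 ?mul00 // L_ract.
have e010 : Bd (mul x0 y1) z0 = Bd x0 (mul y1 z0)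
  by rewrite B_10 ?mul01 // B_01 ?mul10 // L_lact // L_ract.
have e001 : Bd (mul x0 y0) z1 = Bd x0 (mul y0 z1)
  by rewrite B_01 ?mul00 // B_01 ?mul01 // L_lact.
have e111 : Bd (mul x1 y1) z1 = Bd x1 (mul y1 z1)
  by rewrite B_01 ?mul11' // B_10 ?mul11' // (L_cyc x1 y1 z1).
rewrite e000 e110 e101 e011 e100 e010 e001 e111.
ring.
Qed.

Lemma bwd : exists B : A -> A -> K^o, odd_symmetric_structure mul A0 A1 B.
Proof.
exists Bd; split.
- by split; [exact: BdL | exact: BdR].
- by move=> x y; split; [exact: B_00 | exact: B_11].
- move=> x y; split=> hx hy;
    [by rewrite /Bd addrC | by rewrite /Bd addrC | by rewrite /Bd addrC |
     by rewrite !B_11 // oppr0].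
- exact: Bd_assoc.
- move=> x h.
  have [g gK Kg] : bijective phi by case: hphi.
  have e1 : pr1 x = 0.
    apply: (can_inj gK); rewrite phi0; apply/lfunP => a.
    have := h (vsval a); rewrite /Bd (pr1_0 _ (subvsP a)) phi0 zero_lfunE addr0.
    by rewrite (pr0_0 _ (subvsP a)) vsvalK zero_lfunE.
  have e0 : pr0 x = 0.
    apply: dual_sep => f; rewrite -(Kg f).
    have := h (vsval (g f)); rewrite /Bd (pr0_1 _ (subvsP _)) linear0 add0r.
    by rewrite (pr1_1 _ (subvsP _)) vsvalK.
  have : vsval (pr0 x) + vsval (pr1 x) = x.
    by rewrite /pr0 /pr1 !vsprojK ?p0_in ?p1_in // -decomp.
  by rewrite e0 e1 !linear0 addr0.
Qed.
End Bwd.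
End Main.

Theorem mainTheorem2 (K : closedFieldType) (hK : [pchar K] =i pred0)
    (A : vectType K) (mul : A -> A -> A) (A0 A1 : {vspace A})
    (hA : assoc_superalgebra mul A0 A1) :
  (exists B : A -> A -> K^o, odd_symmetric_structure mul A0 A1 B) <->
  (exists phi : subvs_of A1 -> 'Hom(subvs_of A0, K^o),
      bimodule_iso mul A0 A1 phi /\
      forall x y z : subvs_of A1,
        phi x (mul11 mul A0 A1 y z) = phi z (mul11 mul A0 A1 x y)).
Proof.
split.
- by case=> B hB; exact: (@fwd _ _ _ _ _ hA _ hB).
- by case=> phi [hphi hcyc]; exact: (@bwd _ _ _ _ _ hA _ hphi hcyc).
Qed.
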